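(* Let $f^-,f^+:\mathbb R\to\mathbb R$ be twice differentiable and consider the state coupling $\theta_-=\theta_+=\mathrm{Id}$, so that $w(u,v)=u$ and $f(w,v)=(1-v)f^-(w)+vf^+(w)$. Let $v\in L^\infty(\mathbb R)$ take values in $[0,1]$, and let $w_0\in L^\infty(\mathbb R)\cap BV(\mathbb R)$ be the initial datum. Let $0<\epsilon<\frac12$ and assume the strengthened CFL condition $$\frac{\Delta t}{\Delta x}\max_{|w|\le\|w_0\|_{L^\infty(\mathbb R)},\ 0\le v\le1}|\partial_wf(w,v)|\le\frac12-\epsilon.$$ Then the finite volume scheme described in the context, with the Godunov numerical flux, is total variation diminishing: $TV(w_{\Delta x}(t^{n+1},\cdot))\le TV(w_{\Delta x}(t^n,\cdot))$ for all $n$, and in particular $TV(w_{\Delta x}(t^n,\cdot))\le TV(w_0)$ for all $n$.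
   Context: Mesh $\Delta t,\Delta x>0$, $t^n=n\Delta t$, $x_j=j\Delta x$, $x_{j+1/2}=(j+1/2)\Delta x$. Set $w^0_j=\frac1{\Delta x}\int_{x_{j-1/2}}^{x_{j+1/2}}w_0$ and $v_{j+1/2}=\frac1{\Delta x}\int_{x_j}^{x_{j+1}}v$. Godunov flux: for $v\in[0,1]$, $g(a,b;v)=f(\omega(0^+;a,b,v),v)$, where $\omega(x/t;a,b,v)$ is the self-similar entropy solution of the Riemann problem $\partial_t\omega+\partial_xf(\omega,v)=0$ with $\omega(0,x)=a$ for $x<0$ and $b$ for $x>0$. Scheme (which here has $u^n_j=w^n_j$): reconstruction $w^n_{j-1/2,+}=w^n_{j+1/2,-}=w^n_j$, $w^n_{j+1/2,+}=w^n_{j+1}$; $g^n_{j+1/2}=g(w^n_j,w^n_{j+1};v_{j+1/2})$; $w^{n+1}_j=w^n_j-\frac{\Delta t}{\Delta x}\big((g^n_{j+1/2}-f(w^n_j,v_{j+1/2}))-(g^n_{j-1/2}-f(w^n_j,v_{j-1/2}))\big)$. The approximate solution is $w_{\Delta x}(t,x)=w^n_j$ for $x\in(x_{j-1/2},x_{j+1/2})$, $t\in[t^n,t^{n+1})$, and $TV$ denotes total variation on $\mathbb R$. *)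

(* Defs.v *)
From HB Require Import structures.
From mathcomp Require Import all_boot all_order all_algebra.
From mathcomp Require Import all_classical all_reals all_analysis.

Set Implicit Arguments.
Unset Strict Implicit.
Unset Printing Implicit Defensive.
Import Order.TTheory GRing.Theory Num.Theory.
Import numFieldNormedType.Exports.
Local Open Scope classical_set_scope.
Local Open Scope ring_scope.

Section Defs.
Variable R : realType.

Local Notation leb := (@lebesgue_measure R).

Definition TV_pointwise (f : R -> R) : \bar R :=
  ereal_sup [set total_variation ab.1 ab.2 f | ab in [set: R * R]].

(* Total variation on R of (the L^1_loc class of) f: the essential variation,
   i.e. the infimum of the pointwise variation over all a.e.-representatives. *)
Definition TV (f : R -> R) : \bar R :=
  ereal_inf [set TV_pointwise g | g in [set g : R -> R | {ae leb, forall x, g x = f x}]].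

Definition Linfty (f : R -> R) : Prop :=
  measurable_fun [set: R] f /\ exists M : R, {ae leb, forall x, `|f x| <= M}.

Definition Linfty_norm (f : R -> R) : R :=
  inf [set M : R | {ae leb, forall x, `|f x| <= M}].

Definition avg (dx a b : R) (f : R -> R) : R :=
  dx^-1 * Rintegral leb `[a, b] f.

Definition flux (fm fp : R -> R) (w v : R) : R := (1 - v) * fm w + v * fp w.

(* Godunov numerical flux for the scalar flux F := flux fm fp (.) v:
   g(a,b;v) = min_{a<=w<=b} F(w) if a <= b, max_{b<=w<=a} F(w) if a > b.
   (Closed form of f(omega(0+;a,b,v),v), omega the entropy Riemann solution.) *)
Definition godunov (fm fp : R -> R) (a b v : R) : R :=
  if a <= b then inf [set flux fm fp w v | w in `[a, b]]
  else sup [set flux fm fp w v | w in `[b, a]].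

Definition xc (dx : R) (j : int) : R := j%:~R * dx.
Definition xh (dx : R) (j : int) : R := (j%:~R + 2^-1) * dx.

Definition vh (dx : R) (v : R -> R) (j : int) : R := avg dx (xc dx j) (xc dx (j + 1)) v.

Definition w_init (dx : R) (w0 : R -> R) (j : int) : R :=
  avg dx (xh dx (j - 1)) (xh dx j) w0.

Definition step (fm fp : R -> R) (dt dx : R) (v : R -> R) (w : int -> R) (j : int) : R :=
  let gr := godunov fm fp (w j) (w (j + 1)) (vh dx v j) in
  let gl := godunov fm fp (w (j - 1)) (w j) (vh dx v (j - 1)) in
  w j - dt / dx * ((gr - flux fm fp (w j) (vh dx v j))
                   - (gl - flux fm fp (w j) (vh dx v (j - 1)))).

Fixpoint scheme (fm fp : R -> R) (dt dx : R) (v w0 : R -> R) (n : nat) : int -> R :=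
  match n with
  | 0%N => w_init dx w0
  | n'.+1 => step fm fp dt dx v (scheme fm fp dt dx v w0 n')
  end.

(* w_{dx}(t^n, x) = w^n_j for x in (x_{j-1/2}, x_{j+1/2}); the (measure-zero)
   values at the cell interfaces x_{j+1/2} are set to w^n_{j+1}. *)
Definition w_dx (fm fp : R -> R) (dt dx : R) (v w0 : R -> R) (n : nat) (x : R) : R :=
  scheme fm fp dt dx v w0 n (Num.floor (x / dx + 2^-1)).

End Defs.

(* Main.v *)
Require Import Defs.
From HB Require Import structures.
From mathcomp Require Import all_boot all_order all_algebra.
From mathcomp Require Import all_classical all_reals all_analysis.
From mathcomp Require Import ring lra zify.
Import Order.TTheory GRing.Theory Num.Theory.
Import numFieldNormedType.Exports.
Local Open Scope classical_set_scope.
Local Open Scope ring_scope.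
Set Implicit Arguments.
Unset Strict Implicit.

Section S.
Variable R : realType.

Lemma flux_derivable (fm fp : R -> R) vv x :
  (forall x, derivable fm x 1) -> (forall x, derivable fp x 1) ->
  derivable (fun z => flux fm fp z vv) x 1.
Proof.
move=> dm dp.
have -> : (fun z => flux fm fp z vv) = ((1 - vv) \*: fm + vv \*: fp)%R.
  by apply: funext => z; rewrite /flux.
apply: derivableD; exact: derivableZ.
Qed.

Lemma lip_mvt (F : R -> R) (lam c N : R) :
  0 < lam ->
  (forall x, derivable F x 1) ->
  (forall w, `|w| <= N -> lam * `|derive1 F w| <= c) ->
  forall x y, `|x| <= N -> `|y| <= N -> lam * `|F y - F x| <= c * `|y - x|.
Proof.
move=> lam0 dF hF.
have key : forall x y, x < y -> `|x| <= N -> `|y| <= N ->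
    lam * `|F y - F x| <= c * `|y - x|.
  move=> x y xy xN yN.
  have [z zin ->] := @MVT R F (derive1 F) x y xy
     (fun z _ => ltac:(rewrite derive1E; exact: derivableP))
     (derivable_within_continuous (fun z _ => dF z)).
  have zN : `|z| <= N.
    move: zin; rewrite in_itv /= => /andP[xz zy].
    rewrite ler_norml; move: xN yN; rewrite !ler_norml => /andP[xN1 xN2] /andP[yN1 yN2].
    apply/andP; split; [apply: le_trans xN1 (ltW xz)| apply: le_trans (ltW zy) yN2].
  rewrite normrM mulrA ler_pM2r ?hF //.
  by rewrite normr_gt0 subr_eq0 gt_eqF.
move=> x y xN yN.
case: (ltgtP x y) => [xy|yx|->]; first exact: key.
  by rewrite distrC [`|y - x|]distrC; exact: key.
by rewrite !subrr normr0 !mulr0.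
Qed.

End S.

Section S.
Variable R : realType.

Lemma inf_bnds (F : R -> R) K a b x0 : a <= b -> x0 \in `[a, b] ->
  (forall w, w \in `[a, b] -> `|F w - F x0| <= K) ->
  F x0 - K <= inf [set F w | w in `[a, b]] <= F x0.
Proof.
move=> ab x0in H; apply/andP; split.
  apply: lb_le_inf; first by exists (F x0), x0.
  move=> _ [w win <-]; have := H w win.
  by rewrite ler_norml => /andP[h _]; lra.
apply: ge_inf; last by exists x0.
exists (F x0 - K) => _ [w win <-]; have := H w win.
by rewrite ler_norml => /andP[h _]; lra.
Qed.

Lemma sup_bnds (F : R -> R) K a b x0 : a <= b -> x0 \in `[a, b] ->
  (forall w, w \in `[a, b] -> `|F w - F x0| <= K) ->
  F x0 <= sup [set F w | w in `[a, b]] <= F x0 + K.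
Proof.
move=> ab x0in H; apply/andP; split.
  apply: ub_le_sup; last by exists x0.
  exists (F x0 + K) => _ [w win <-]; have := H w win.
  by rewrite ler_norml => /andP[_ h]; lra.
apply: ge_sup; first by exists (F x0), x0.
move=> _ [w win <-]; have := H w win.
by rewrite ler_norml => /andP[_ h]; lra.
Qed.

End S.

Section S.
Variable R : realType.

Lemma alpha_ex (c d x : R) : 0 <= c ->
  (0 <= d /\ 0 <= x <= c * d) \/ (d < 0 /\ c * d <= x <= 0) ->
  exists al, 0 <= al <= c /\ x = al * d.
Proof.
move=> c0 [[d0 /andP[x0 xc]]|[d0 /andP[cx x0]]].
  have [dE|dn0] := eqVneq d 0.
    exists 0; split; first by rewrite lexx c0.
    by move: xc; rewrite dE mulr0 mul0r => xc; lra.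
  have dp : 0 < d by rewrite lt_neqAle eq_sym dn0 d0.
  exists (x / d); split; last by rewrite mulrVK // unitfE.
  by rewrite divr_ge0 //= ler_pdivrMr.
exists (x / d); split; last by rewrite mulrVK // unitfE lt_eqF.
by rewrite ler_ndivlMr // mul0r x0 /= ler_ndivrMr // mulrC.
Qed.

Lemma godunov_incr (fm fp : R -> R) (vv lam c N a b : R) :
  0 < lam -> 0 <= c ->
  (forall x y, `|x| <= N -> `|y| <= N ->
     lam * `|flux fm fp y vv - flux fm fp x vv| <= c * `|y - x|) ->
  `|a| <= N -> `|b| <= N ->
  exists al be, [/\ 0 <= al <= c, 0 <= be <= c,
    lam * (flux fm fp a vv - godunov fm fp a b vv) = al * (b - a) &
    lam * (flux fm fp b vv - godunov fm fp a b vv) = be * (b - a)].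
Proof.
move=> lam0 c0 lip aN bN.
set F := fun w => flux fm fp w vv.
have inN : forall l r w, `|l| <= N -> `|r| <= N -> w \in `[l, r] -> `|w| <= N.
  move=> l r w lN rN; rewrite in_itv /= => /andP[lw wr].
  move: lN rN; rewrite !ler_norml => /andP[? ?] /andP[? ?].
  apply/andP; split; lra.
have K : forall l r x0, `|l| <= N -> `|r| <= N -> x0 \in `[l, r] -> forall w, w \in `[l, r] ->
    `|F w - F x0| <= c * (r - l) / lam.
  move=> l r x0 lN rN x0in w win.
  rewrite ler_pdivlMr // mulrC.
  apply: le_trans (lip _ _ (inN _ _ _ lN rN x0in) (inN _ _ _ lN rN win)) _.
  apply: ler_wpM2l => //; move: x0in win; rewrite !in_itv /= => /andP[? ?] /andP[? ?].
  rewrite ler_norml; apply/andP; split; lra.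
have sc : forall x y d, x <= y <= x + d / lam -> 0 <= lam * (y - x) <= d.
  move=> x y d /andP[xy yd]; rewrite mulr_ge0 ?subr_ge0 ?(ltW lam0) //=.
  by rewrite -ler_pdivlMl // mulrC lerBlDl.
rewrite /godunov; case: ifPn => ab.
  have ain : a \in `[a, b] by rewrite in_itv /= lexx ab.
  have bin : b \in `[a, b] by rewrite in_itv /= lexx ab andbT.
  have /andP[h1 h2] := inf_bnds ab ain (K _ _ _ aN bN ain).
  have /andP[h3 h4] := inf_bnds ab bin (K _ _ _ aN bN bin).
  set G := inf _ in h1 h2 h3 h4 *.
  have [al [al0 alE]] : exists al, 0 <= al <= c /\ lam * (F a - G) = al * (b - a).
    apply: alpha_ex => //; left; split; first lra.
    by apply: sc; rewrite h2 /=; lra.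
  have [be [be0 beE]] : exists be, 0 <= be <= c /\ lam * (F b - G) = be * (b - a).
    apply: alpha_ex => //; left; split; first lra.
    by apply: sc; rewrite h4 /=; lra.
  by exists al, be.
rewrite -ltNge in ab.
have ba := ltW ab.
have ain : a \in `[b, a] by rewrite in_itv /= lexx ba.
have bin : b \in `[b, a] by rewrite in_itv /= lexx ba andbT.
have /andP[h1 h2] := sup_bnds ba ain (K _ _ _ bN aN ain).
have /andP[h3 h4] := sup_bnds ba bin (K _ _ _ bN aN bin).
set G := sup _ in h1 h2 h3 h4 *.
have [al [al0 alE]] : exists al, 0 <= al <= c /\ lam * (F a - G) = al * (b - a).
  apply: alpha_ex => //; right; split; first lra.
  have /andP[u1 u2] : 0 <= lam * (G - F a) <= c * (a - b) by apply: sc; rewrite h1 h2.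
  rewrite -opprB mulrN; apply/andP; split; lra.
have [be [be0 beE]] : exists be, 0 <= be <= c /\ lam * (F b - G) = be * (b - a).
  apply: alpha_ex => //; right; split; first lra.
  have /andP[u1 u2] : 0 <= lam * (G - F b) <= c * (a - b) by apply: sc; rewrite h3 h4.
  rewrite -opprB mulrN; apply/andP; split; lra.
by exists al, be.
Qed.

End S.

Section S.
Variable R : realType.

Definition dlt (w : int -> R) (j : int) := w (j + 1) - w j.
Definition Dw (w : int -> R) (m : int) (k : nat) :=
  \sum_(0 <= i < k) `|dlt w (m + i%:Z)|.

Lemma Dw_ge0 w m k : 0 <= Dw w m k.
Proof. by apply: sumr_ge0 => i _. Qed.

Lemma Dw_ext (w : int -> R) (m : int) (k : nat) :
  Dw w (m - 1) k.+2 = `|dlt w (m - 1)| + Dw w m k + `|dlt w (m + k%:Z)|.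
Proof.
rewrite /Dw big_nat_recl // big_nat_recr //= addr0 addrA; congr (_ + _ + _).
  by apply: eq_bigr => i _; congr (`|dlt w _|); lia.
by congr (`|dlt w _|); lia.
Qed.

Lemma tvd_step (w w' al be : int -> R) (c : R) :
  c <= 2^-1 ->
  (forall j, 0 <= al j <= c) -> (forall j, 0 <= be j <= c) ->
  (forall j, w' j = w j + al j * dlt w j - be (j - 1) * dlt w (j - 1)) ->
  forall m k, Dw w' m k <= Dw w (m - 1) k.+2.
Proof.
move=> c2 hal hbe hw m k.
set A := fun j => al j * `|dlt w j|.
set B := fun j => be j * `|dlt w j|.
have pt : forall j, `|dlt w' j| <=
    `|dlt w j| - (A j - A (j + 1)) - (B j - B (j - 1)).
  move=> j.
  have -> : dlt w' j = (1 - al j - be j) * dlt w j + al (j + 1) * dlt w (j + 1)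
                       + be (j - 1) * dlt w (j - 1).
    rewrite /dlt !hw /dlt.
    have -> : j + 1 - 1 = j by lia.
    have -> : j - 1 + 1 = j by lia.
    ring.
  have /andP[a0 a1] := hal j; have /andP[b0 b1] := hbe j.
  have /andP[a0' _] := hal (j + 1); have /andP[b0' _] := hbe (j - 1).
  apply: le_trans (ler_normD _ _) _; apply: le_trans (lerD (ler_normD _ _) (lexx _)) _.
  rewrite !normrM (ger0_norm a0') (ger0_norm b0') ger0_norm; last lra.
  rewrite /A /B; lra.
rewrite Dw_ext /Dw.
apply: le_trans (ler_sum _ (fun i _ => pt (m + i%:Z))) _.
rewrite sumrB sumrB.
have tA : \sum_(0 <= i < k) (A (m + i%:Z) - A (m + i%:Z + 1)) = A m - A (m + k%:Z).
  rewrite [RHS](_ : _ = - A (m + k%:Z) - - A (m + 0%:Z)); last by rewrite addr0; ring.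
  rewrite -(@telescope_sumr _ 0 k (fun i => - A (m + i%:Z))) //.
  apply: eq_bigr => i _; rewrite opprK addrC.
  by congr (- A _ + _); lia.
have tB : \sum_(0 <= i < k) (B (m + i%:Z) - B (m + i%:Z - 1)) = B (m + k%:Z - 1) - B (m - 1).
  rewrite [RHS](_ : _ = B (m + k%:Z - 1) - B (m + 0%:Z - 1)); last by rewrite addr0.
  rewrite -(@telescope_sumr _ 0 k (fun i => B (m + i%:Z - 1))) //.
  apply: eq_bigr => i _.
  by congr (B _ - _); lia.
rewrite tA tB.
have hA : forall j, 0 <= A j <= `|dlt w j|.
  move=> j; have /andP[? ?] := hal j; rewrite /A mulr_ge0 //= ler_piMl //; lra.
have hB : forall j, 0 <= B j <= `|dlt w j|.
  move=> j; have /andP[? ?] := hbe j; rewrite /B mulr_ge0 //= ler_piMl //; lra.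
have /andP[? ?] := hA m; have /andP[? ?] := hA (m + k%:Z).
have /andP[? ?] := hB (m - 1); have /andP[? ?] := hB (m + k%:Z - 1).
set S := \sum_(_ <= _ < _) _; lra.
Qed.

Lemma maxp_step (w w' al be : int -> R) (c N : R) :
  c <= 2^-1 ->
  (forall j, 0 <= al j <= c) -> (forall j, 0 <= be j <= c) ->
  (forall j, w' j = w j + al j * dlt w j - be (j - 1) * dlt w (j - 1)) ->
  (forall j, `|w j| <= N) -> forall j, `|w' j| <= N.
Proof.
move=> c2 hal hbe hw hN j.
have -> : w' j = (1 - al j - be (j - 1)) * w j + al j * w (j + 1) + be (j - 1) * w (j - 1).
  rewrite hw /dlt; have -> : j - 1 + 1 = j by lia.
  ring.
have /andP[a0 a1] := hal j; have /andP[b0 b1] := hbe (j - 1).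
apply: le_trans (ler_normD _ _) _; apply: le_trans (lerD (ler_normD _ _) (lexx _)) _.
rewrite !normrM (ger0_norm a0) (ger0_norm b0) ger0_norm; last lra.
have := hN j; have := hN (j + 1); have := hN (j - 1).
set x := `|w j|; set y := `|w (j + 1)|; set z := `|w (j - 1)|.
move=> hz hy hx.
have e1 : al j * y <= al j * N by rewrite ler_wpM2l.
have e2 : be (j - 1) * z <= be (j - 1) * N by rewrite ler_wpM2l.
have e3 : (1 - al j - be (j - 1)) * x <= (1 - al j - be (j - 1)) * N by rewrite ler_wpM2l //; lra.
lra.
Qed.

End S.

Section S.
Variable R : realType.

Lemma DwS (w : int -> R) m k : Dw w m k.+1 = Dw w m k + `|dlt w (m + k%:Z)|.
Proof. by rewrite /Dw big_nat_recr. Qed.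

Lemma chain_le (w : int -> R) m k : `|w (m + k%:Z) - w m| <= Dw w m k.
Proof.
elim: k => [|k IH]; first by rewrite addr0 subrr normr0 Dw_ge0.
rewrite DwS; apply: le_trans (ler_distD (w (m + k%:Z)) _ _) _.
rewrite addrC; apply: lerD => //.
by rewrite /dlt (_ : m + k%:Z + 1 = m + k.+1%:Z) //; lia.
Qed.

Lemma Dw_add (w : int -> R) m k1 k2 :
  Dw w m (k1 + k2) = Dw w m k1 + Dw w (m + k1%:Z) k2.
Proof.
elim: k2 => [|k2 IH]; first by rewrite addn0 [Dw _ _ 0]/Dw big_geq // addr0.
rewrite addnS !DwS IH -addrA; congr (_ + (_ + `|dlt w _|)); lia.
Qed.

Lemma Dw_split (w : int -> R) p q r : p <= q -> q <= r ->
  Dw w p `|r - p|%N = Dw w p `|q - p|%N + Dw w q `|r - q|%N.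
Proof.
move=> pq qr.
have -> : `|r - p|%N = (`|q - p| + `|r - q|)%N by lia.
rewrite Dw_add; congr (_ + Dw w _ _); lia.
Qed.

Lemma variation_cons (a b x : R) (f : R -> R) s :
  variation a b f (x :: s) = `|f x - f a| + variation x b f s.
Proof. by rewrite /variation big_nat_recl. Qed.

Lemma variation_step (w : int -> R) (J : R -> int) :
  {homo J : x y / x <= y} ->
  forall b s a, itv_partition a b s ->
  variation a b (w \o J) s <= Dw w (J a) `|J b - J a|%N.
Proof.
move=> Jh b; elim => [|x s IH] a.
  by move=> /itv_partition_nil ->; rewrite variation_nil Dw_ge0.
move=> hp; have [/andP[ax _] _] := hp.
have xb := itv_partition_le (itv_partition_cons hp).
rewrite variation_cons (Dw_split _ (Jh _ _ (ltW ax)) (Jh _ _ xb)).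
apply: lerD; last exact: IH (itv_partition_cons hp).
rewrite /=; have := chain_le w (J a) `|J x - J a|%N.
have -> : J a + `|J x - J a|%N = J x by have := Jh _ _ (ltW ax); lia.
done.
Qed.

Definition Sw (w : int -> R) : \bar R :=
  ereal_sup [set (Dw w mk.1 mk.2)%:E | mk in [set: int * nat]].

Lemma TVp_step (w : int -> R) (J : R -> int) :
  {homo J : x y / x <= y} -> (TV_pointwise (w \o J) <= Sw w)%E.
Proof.
move=> Jh; apply: ge_ereal_sup => _ [[a b] _ <-] /=.
apply: ge_ereal_sup => _ [_ [s hs <-] <-].
apply: (@le_trans _ _ (Dw w (J a) `|J b - J a|%N)%:E).
  by rewrite lee_fin; exact: variation_step hs.
by apply: ereal_sup_ubound; exists (J a, `|J b - J a|%N).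
Qed.

End S.

Section S.
Variable R : realType.

Lemma tv_chain (g : R -> R) (p : nat -> R) k :
  (forall i, (i < k)%N -> p i <= p i.+1) ->
  p 0%N <= p k /\
  ((\sum_(0 <= i < k) `|g (p i.+1) - g (p i)|)%:E <= total_variation (p 0%N) (p k) g)%E.
Proof.
elim: k => [|k IH] hp.
  by split => //; rewrite big_geq // total_variationxx.
have [h0 h1] := IH (fun i ik => hp i (leq_trans ik (leqnSn k))).
have hk := hp k (ltnSn k).
split; first exact: le_trans hk.
rewrite big_nat_recr //= (total_variationD _ h0 hk) EFinD.
by apply: leeD => //; exact: total_variation_ge.
Qed.

Lemma J_eq (dx : R) (j : int) (p : R) : 0 < dx ->
  xh dx (j - 1) < p < xh dx j -> Num.floor (p / dx + 2^-1) = j.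
Proof.
move=> dx0 /andP[h1 h2]; apply: floor_def.
move: h1 h2; rewrite /xh !intrD /= => h1 h2.
have e1 : (j%:~R - 1 + 2^-1) < p / dx by rewrite ltr_pdivlMr.
have e2 : p / dx < (j%:~R + 2^-1) by rewrite ltr_pdivrMr.
apply/andP; split; lra.
Qed.

Lemma exists_good_point (dx : R) (g : R -> R) (w : int -> R) (j : int) :
  0 < dx ->
  {ae (@lebesgue_measure R), forall x, g x = w (Num.floor (x / dx + 2^-1))} ->
  exists p, xh dx (j - 1) < p < xh dx j /\ g p = w j.
Proof.
move=> dx0 [A [mA A0 sub]].
apply: contrapT => hno.
have lr : xh dx (j - 1) < xh dx j.
  by rewrite /xh ltr_pM2r // intrD; lra.
have sub2 : `]xh dx (j - 1), xh dx j[ `<=` A.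
  move=> p pin; apply: sub => /= gp; apply: hno; exists p; split => //.
  by rewrite gp (J_eq dx0 pin).
have := le_measure (@lebesgue_measure R) (mem_set (measurable_itv `]xh dx (j - 1), xh dx j[)) (mem_set mA) sub2.
move=> h; move: A0 => /eqP; rewrite eq_le => /andP[A0 _].
have e : (@lebesgue_measure R `]xh dx (j - 1), xh dx j[ = (xh dx j - xh dx (j - 1))%:E)%E.
  by rewrite lebesgue_measure_itv /= lte_fin lr.
have : ((xh dx j - xh dx (j - 1))%:E <= 0)%E by rewrite -e; exact: le_trans h A0.
rewrite lee_fin /xh intrD; lra.
Qed.

Lemma TVp_lower (dx : R) (g : R -> R) (w : int -> R) :
  0 < dx ->
  {ae (@lebesgue_measure R), forall x, g x = w (Num.floor (x / dx + 2^-1))} ->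
  forall m k, ((Dw w m k)%:E <= TV_pointwise g)%E.
Proof.
move=> dx0 hae m k.
have [p hp] := choice (fun i : nat => exists_good_point (m + i%:Z) dx0 hae).
have mono : forall i, (i < k)%N -> p i <= p i.+1.
  move=> i _; have [/andP[_ a1] _] := hp i; have [/andP[b1 _] _] := hp i.+1.
  apply/ltW; apply: lt_trans a1 _; apply: le_lt_trans b1.
  by rewrite (_ : m + i.+1%:Z - 1 = m + i%:Z) //; lia.
have [_ hc] := tv_chain g mono.
have -> : Dw w m k = \sum_(0 <= i < k) `|g (p i.+1) - g (p i)|.
  apply: eq_bigr => i _; have [_ ->] := hp i; have [_ ->] := hp i.+1.
  by rewrite /dlt (_ : m + i%:Z + 1 = m + i.+1%:Z) //; lia.
apply: le_trans hc _.
by apply: ereal_sup_ubound; exists (p 0%N, p k).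
Qed.

End S.

Section S.
Variable R : realType.
Local Notation leb := (@lebesgue_measure R).

Lemma leb_cc (l r : R) : l < r -> leb `[l, r] = (r - l)%:E.
Proof. by move=> lr; rewrite lebesgue_measure_itv /= lte_fin lr. Qed.

Lemma int_cst (l r c : R) : l < r -> leb.-integrable `[l, r] (fun _ => c%:E).
Proof.
move=> lr; apply/integrableP; split; first exact: measurable_cst.
rewrite (integral_cst leb (measurable_itv _) `|c|%:E).
set X := (X in (_ * X < _)%E).
rewrite (_ : X = (r - l)%:E); last exact: leb_cc.
by rewrite -EFinM ltry.
Qed.

Lemma int_bdd (f : R -> R) (M l r : R) : l < r ->
  measurable_fun [set: R] f -> {ae leb, forall x, `|f x| <= M} ->
  leb.-integrable `[l, r] (EFin \o f).
Proof.
move=> lr mf hM; apply/integrableP; split.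
  by apply/measurable_realfun.measurable_EFinP; exact: measurable_funS mf.
apply: (@le_lt_trans _ _ (\int[leb]_(x in `[l, r]) (fun _ => `|M|%:E) x)%E).
  apply: ae_ge0_le_integral => //.
    apply/(measurable_realfun.measurable_EFinP _ (Num.norm \o f)).
    apply: measurableT_comp => //; exact: measurable_funS mf.
  case: hM => A [mA A0 sub]; exists A; split => // x hx; apply: sub => hfx; apply: hx.
  hnf; move=> _; hnf in hfx; rewrite /= lee_fin.
  apply: le_trans hfx _; exact: ler_norm.
rewrite (integral_cst leb (measurable_itv _) `|M|%:E).
set X := (X in (_ * X < _)%E).
rewrite (_ : X = (r - l)%:E); last exact: leb_cc.
by rewrite -EFinM ltry.
Qed.

End S.

Section S2.
Variable R : realType.
Local Notation leb := (@lebesgue_measure R).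

Lemma int_cst_val (l r c : R) : l < r ->
  (\int[leb]_(x in `[l, r]) (fun _ => c%:E) x = (c * (r - l))%:E)%E.
Proof.
move=> lr; rewrite (integral_cst leb (measurable_itv _) c%:E).
set X := (X in (_ * X)%E).
by rewrite (_ : X = (r - l)%:E); last exact: leb_cc.
Qed.

Lemma avg_core (f : R -> R) (l r : R) (A : set (measurableTypeR R)) (c : R) :
  l < r -> measurable A -> leb A = 0 -> leb.-integrable `[l, r] (EFin \o f) ->
  (forall y, y \in `[l, r] -> ~ A y -> c <= f y) ->
  c * (r - l) <= Rintegral leb `[l, r] f.
Proof.
move=> lr mA A0 hint hgt.
have mI : measurable (`[l, r] : set (measurableTypeR R)) := measurable_itv _.
have hc := int_cst c lr.
have e1 := negligible_integral mA mI hint A0.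
have e2 := negligible_integral mA mI hc A0.
have mIA : measurable ((`[l, r] : set (measurableTypeR R)) `\` A) by exact: measurableD.
have e3 : (\int[leb]_(x in `[l, r] `\` A) (fun _ => c%:E) x <=
           \int[leb]_(x in `[l, r] `\` A) (EFin \o f) x)%E.
  apply: le_integral => //.
  - by apply: (integrableS mI mIA _ hc) => x [].
  - by apply: (integrableS mI mIA _ hint) => x [].
  - move=> y /set_mem [yI yA]; rewrite /= lee_fin; apply: hgt => //; exact: mem_set.
have fin := integrable_fin_num mI hint.
rewrite -lee_fin /Rintegral fineK //.
by rewrite -int_cst_val // e2 e1.
Qed.

Lemma avg_core2 (f : R -> R) (l r : R) (A : set (measurableTypeR R)) (c : R) :
  l < r -> measurable A -> leb A = 0 -> leb.-integrable `[l, r] (EFin \o f) ->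
  (forall y, y \in `[l, r] -> ~ A y -> f y <= c) ->
  Rintegral leb `[l, r] f <= c * (r - l).
Proof.
move=> lr mA A0 hint hgt.
have mI : measurable (`[l, r] : set (measurableTypeR R)) := measurable_itv _.
have hc := int_cst c lr.
have e1 := negligible_integral mA mI hint A0.
have e2 := negligible_integral mA mI hc A0.
have mIA : measurable ((`[l, r] : set (measurableTypeR R)) `\` A) by exact: measurableD.
have e3 : (\int[leb]_(x in `[l, r] `\` A) (EFin \o f) x <=
           \int[leb]_(x in `[l, r] `\` A) (fun _ => c%:E) x)%E.
  apply: le_integral => //.
  - by apply: (integrableS mI mIA _ hint) => x [].
  - by apply: (integrableS mI mIA _ hc) => x [].
  - move=> y /set_mem [yI yA]; rewrite /= lee_fin; apply: hgt => //; exact: mem_set.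
have fin := integrable_fin_num mI hint.
rewrite -lee_fin /Rintegral fineK //.
by rewrite -int_cst_val // e2 e1.
Qed.


Lemma avg_le (f : R -> R) (l r : R) (A : set (measurableTypeR R)) (dl : R) :
  l < r -> measurable A -> leb A = 0 -> leb.-integrable `[l, r] (EFin \o f) ->
  0 < dl ->
  exists y, [/\ y \in `[l, r], ~ A y & f y <= (r - l)^-1 * Rintegral leb `[l, r] f + dl].
Proof.
move=> lr mA A0 hint dl0; apply: contrapT => hno.
set a := (r - l)^-1 * _ in hno.
have := @avg_core f l r A (a + dl) lr mA A0 hint.
have rl0 : 0 < r - l by rewrite subr_gt0.
have H : forall y, y \in `[l, r] -> ~ A y -> a + dl <= f y.
  move=> y yI yA; rewrite leNgt; apply/negP => fy; apply: hno; exists y; split => //.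
  exact: ltW.
move=> /(_ H); rewrite -ler_pdivlMr // mulrC -/a; lra.
Qed.

Lemma avg_ge (f : R -> R) (l r : R) (A : set (measurableTypeR R)) (dl : R) :
  l < r -> measurable A -> leb A = 0 -> leb.-integrable `[l, r] (EFin \o f) ->
  0 < dl ->
  exists y, [/\ y \in `[l, r], ~ A y & (r - l)^-1 * Rintegral leb `[l, r] f - dl <= f y].
Proof.
move=> lr mA A0 hint dl0; apply: contrapT => hno.
set a := (r - l)^-1 * _ in hno.
have := @avg_core2 f l r A (a - dl) lr mA A0 hint.
have rl0 : 0 < r - l by rewrite subr_gt0.
have H : forall y, y \in `[l, r] -> ~ A y -> f y <= a - dl.
  move=> y yI yA; rewrite leNgt; apply/negP => fy; apply: hno; exists y; split => //.
  exact: ltW.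
move=> /(_ H); rewrite -ler_pdivrMr // mulrC -/a; lra.
Qed.

End S2.

Section S.
Variable R : realType.

Lemma btw (p q a d : R) : 0 <= d ->
  (p <= a + d /\ a - d <= q) \/ (q <= a + d /\ a - d <= p) ->
  `|q - a| + `|a - p| <= `|q - p| + 2 * d.
Proof.
move=> d0 H.
have [h1|h1] := lerP 0 (q - a); have [h2|h2] := lerP 0 (a - p);
have [h3|h3] := lerP 0 (q - p);
rewrite ?(ger0_norm h1) ?(ltr0_norm h1) ?(ger0_norm h2) ?(ltr0_norm h2)
  ?(ger0_norm h3) ?(ltr0_norm h3); case: H => [[? ?]|[? ?]]; lra.
Qed.

Lemma tv_chain2 (g : R -> R) (u u' : nat -> R) k :
  (forall i, (i <= k)%N -> u i <= u' i) -> (forall i, (i < k)%N -> u' i <= u i.+1) ->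
  u 0%N <= u' k /\
  ((\sum_(0 <= i < k) `|g (u i.+1) - g (u' i)| + \sum_(0 <= i < k.+1) `|g (u' i) - g (u i)|)%:E
    <= total_variation (u 0%N) (u' k) g)%E.
Proof.
elim: k => [|k IH] h1 h2.
  have h := h1 0%N (leqnn 0).
  split => //; rewrite big_geq // add0r big_nat1.
  exact: total_variation_ge.
have [h0 hc] := IH (fun i ik => h1 i (leq_trans ik (leqnSn k)))
                   (fun i ik => h2 i (leq_trans ik (leqnSn k))).
have hk := h2 k (ltnSn k).
have hk1 := h1 k.+1 (leqnn _).
split; first exact: le_trans (le_trans h0 hk) hk1.
have hu : u 0%N <= u k.+1 by exact: le_trans h0 hk.
rewrite (total_variationD _ hu hk1) (total_variationD _ h0 hk).
rewrite big_nat_recr //= big_nat_recr //=.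
rewrite (_ : forall x y z t : R, x + y + (z + t) = (x + z) + y + t); last by move=> *; ring.
rewrite !EFinD; apply: leeD; last exact: total_variation_ge.
apply: leeD => //; exact: total_variation_ge.
Qed.

Lemma chain_real (a P Q : nat -> R) (d : R) k :
  (forall i, `|Q i - a i| + `|a i - P i| <= `|Q i - P i| + 2 * d) ->
  \sum_(0 <= i < k) `|a i.+1 - a i| + `|Q k - a k| <=
  \sum_(0 <= i < k) `|P i.+1 - Q i| + \sum_(0 <= i < k.+1) `|Q i - P i| + 2 * d * k.+1%:R.
Proof.
move=> H; elim: k => [|k IH].
  rewrite big_geq // add0r big_geq // add0r big_nat1 mulr1.
  have := H 0%N; have := normr_ge0 (a 0%N - P 0%N); lra.
rewrite big_nat_recr //= [X in _ <= X + _ + _]big_nat_recr //= [X in _ <= _ + X + _]big_nat_recr //=.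
have t1 : `|a k.+1 - a k| <= `|a k.+1 - P k.+1| + `|P k.+1 - Q k| + `|Q k - a k|.
  apply: le_trans (ler_distD (P k.+1) _ _) _; rewrite -addrA lerD2l.
  exact: ler_distD.
have t2 := H k.+1.
rewrite -[k.+2%:R]natr1 mulrDr mulr1.
lra.
Qed.

End S.

Section S.
Variable R : realType.
Local Notation leb := (@lebesgue_measure R).

Lemma xh_diff (dx : R) (j : int) : xh dx j - xh dx (j - 1) = dx.
Proof. by rewrite /xh intrD /=; ring. Qed.

Lemma xh_lt (dx : R) (j : int) : 0 < dx -> xh dx (j - 1) < xh dx j.
Proof. by move=> dx0; rewrite -subr_gt0 xh_diff. Qed.

Lemma TVp_lower_init (dx M : R) (w0 g : R -> R) :
  0 < dx -> measurable_fun [set: R] w0 -> {ae leb, forall x, `|w0 x| <= M} ->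
  {ae leb, forall x, g x = w0 x} ->
  forall m k, ((Dw (w_init dx w0) m k)%:E <= TV_pointwise g)%E.
Proof.
move=> dx0 mw0 hM [A [mA A0 sub]] m k.
set a := fun i : nat => w_init dx w0 (m + i%:Z).
have aE : forall i, a i = (xh dx (m + i%:Z) - xh dx (m + i%:Z - 1))^-1 *
    Rintegral leb `[xh dx (m + i%:Z - 1), xh dx (m + i%:Z)] w0.
  by move=> i; rewrite xh_diff.
have hint : forall i, leb.-integrable `[xh dx (m + i%:Z - 1), xh dx (m + i%:Z)] (EFin \o w0).
  by move=> i; apply: int_bdd hM => //; exact: xh_lt.
have good : forall y, ~ A y -> g y = w0 y.
  by move=> y yA; apply: contrapT => hy; apply: yA; apply: sub.
apply/lee_addgt0Pr => e e0.
set dl := e / (2 * k.+1%:R).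
have dl0 : 0 < dl by rewrite divr_gt0 // mulr_gt0.
have [y hy] := choice (fun i : nat =>
  @avg_le R w0 _ _ A dl (xh_lt _ dx0) mA A0 (hint i) dl0).
have [z hz] := choice (fun i : nat =>
  @avg_ge R w0 _ _ A dl (xh_lt _ dx0) mA A0 (hint i) dl0).
set u := fun i => if y i <= z i then y i else z i.
set u' := fun i => if y i <= z i then z i else y i.
have h1 : forall i, (i <= k)%N -> u i <= u' i.
  by move=> i _; rewrite /u /u'; case: ifPn => // hyz; apply: ltW; rewrite ltNge.
have inr : forall i, u' i <= xh dx (m + i%:Z).
  move=> i; rewrite /u'; case: ifPn => _.
    by have [+ _ _] := hz i; rewrite in_itv /= => /andP[].
  by have [+ _ _] := hy i; rewrite in_itv /= => /andP[].
have inl : forall i, xh dx (m + i%:Z - 1) <= u i.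
  move=> i; rewrite /u; case: ifPn => _.
    by have [+ _ _] := hy i; rewrite in_itv /= => /andP[].
  by have [+ _ _] := hz i; rewrite in_itv /= => /andP[].
have h2 : forall i, (i < k)%N -> u' i <= u i.+1.
  move=> i _; apply: le_trans (inr i) _; apply: le_trans (inl i.+1).
  by rewrite (_ : m + i.+1%:Z - 1 = m + i%:Z) //; lia.
have [_ htv] := tv_chain2 g h1 h2.
have H : forall i, `|g (u' i) - a i| + `|a i - g (u i)| <= `|g (u' i) - g (u i)| + 2 * dl.
  move=> i; apply: btw; first exact: ltW.
  have [_ yA yle] := hy i; have [_ zA zge] := hz i.
  rewrite -aE in yle zge; rewrite /u /u'; case: ifPn => _.
    by left; rewrite !good.
  by right; rewrite !good.
have cr := chain_real k H.
have -> : Dw (w_init dx w0) m k = \sum_(0 <= i < k) `|a i.+1 - a i|.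
  apply: eq_bigr => i _; rewrite /dlt /a.
  by rewrite (_ : m + i%:Z + 1 = m + i.+1%:Z) //; lia.
have e2 : 2 * dl * k.+1%:R = e.
  have kn : k.+1%:R != 0 :> R by rewrite pnatr_eq0.
  rewrite /dl; field; by rewrite -natr1 addrC in kn.
apply: le_trans (_ : ((\sum_(0 <= i < k) `|g (u i.+1) - g (u' i)| +
   \sum_(0 <= i < k.+1) `|g (u' i) - g (u i)|) + e)%:E <= _)%E.
  rewrite lee_fin -e2; apply: le_trans cr; rewrite lerDl; exact: normr_ge0.
rewrite EFinD; apply: leeD => //; apply: le_trans htv _.
by apply: ereal_sup_ubound; exists (u 0%N, u' k).
Qed.

End S.

Section S.
Variable R : realType.
Local Notation leb := (@lebesgue_measure R).

Lemma avg_in (f : R -> R) (P : R -> Prop) (l r lo hi M : R) : l < r ->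
  measurable_fun [set: R] f -> {ae leb, forall x, `|f x| <= M} ->
  {ae leb, forall x, P x} -> (forall x, P x -> lo <= f x <= hi) ->
  lo <= (r - l)^-1 * Rintegral leb `[l, r] f <= hi.
Proof.
move=> lr mf hM [A [mA A0 sub]] hP.
have hint := int_bdd lr mf hM.
have good : forall y, ~ A y -> lo <= f y <= hi.
  by move=> y yA; apply: hP; apply: contrapT => hy; apply: yA; apply: sub.
set a := (r - l)^-1 * _.
apply/andP; split.
  rewrite leNgt; apply/negP => alo.
  have dl0 : 0 < (lo - a) / 2 by rewrite divr_gt0 // subr_gt0.
  have [y [_ yA yle]] := avg_le lr mA A0 hint dl0.
  have /andP[h _] := good y yA; rewrite -/a in yle; lra.
rewrite leNgt; apply/negP => ahi.
have dl0 : 0 < (a - hi) / 2 by rewrite divr_gt0 // subr_gt0.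
have [y [_ yA yge]] := avg_ge lr mA A0 hint dl0.
have /andP[_ h] := good y yA; rewrite -/a in yge; lra.
Qed.

End S.

Section Main.
Variable R : realType.
Local Notation leb := (@lebesgue_measure R).

Lemma step_decomp (fm fp v : R -> R) (dt dx c N : R) (w : int -> R) :
  0 < dt / dx -> 0 <= c ->
  (forall j, 0 <= vh dx v j <= 1) ->
  (forall vv, 0 <= vv <= 1 -> forall x y, `|x| <= N -> `|y| <= N ->
     dt / dx * `|flux fm fp y vv - flux fm fp x vv| <= c * `|y - x|) ->
  (forall j, `|w j| <= N) ->
  exists al be : int -> R, [/\ forall j, 0 <= al j <= c, forall j, 0 <= be j <= c &
    forall j, step fm fp dt dx v w j = w j + al j * dlt w j - be (j - 1) * dlt w (j - 1)].
Proof.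
move=> lam0 c0 hv lip hw.
have H : forall j, exists ab : R * R, [/\ 0 <= ab.1 <= c, 0 <= ab.2 <= c,
    dt / dx * (flux fm fp (w j) (vh dx v j) - godunov fm fp (w j) (w (j + 1)) (vh dx v j))
      = ab.1 * (w (j + 1) - w j) &
    dt / dx * (flux fm fp (w (j + 1)) (vh dx v j) - godunov fm fp (w j) (w (j + 1)) (vh dx v j))
      = ab.2 * (w (j + 1) - w j)].
  move=> j.
  have [al [be [h1 h2 h3 h4]]] := godunov_incr lam0 c0 (lip _ (hv j)) (hw j) (hw (j + 1)).
  by exists (al, be).
have [ab hab] := choice H.
exists (fun j => (ab j).1), (fun j => (ab j).2); split.
- by move=> j; have [] := hab j.
- by move=> j; have [] := hab j.
move=> j; have [_ _ e1 _] := hab j; have [_ _ _ e2] := hab (j - 1).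
rewrite (_ : j - 1 + 1 = j) in e2; last by lia.
rewrite /step /dlt (_ : j - 1 + 1 = j); last by lia.
rewrite -e1 -e2; ring.
Qed.

End Main.

Unset Implicit Arguments.
Set Strict Implicit.

Theorem theorem5p1 (R : realType) (fm fp : R -> R) (v w0 : R -> R)
    (dt dx eps : R) :
  (forall x, derivable fm x 1) -> (forall x, derivable (derive1 fm) x 1) ->
  (forall x, derivable fp x 1) -> (forall x, derivable (derive1 fp) x 1) ->
  Linfty v -> {ae (@lebesgue_measure R), forall x, 0 <= v x <= 1} ->
  Linfty w0 -> (TV w0 < +oo)%E ->
  0 < dt -> 0 < dx ->
  0 < eps < 2^-1 ->
  (forall w vv : R, `|w| <= Linfty_norm w0 -> 0 <= vv <= 1 ->
     dt / dx * `|derive1 (fun z => flux fm fp z vv) w| <= 2^-1 - eps) ->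
  forall n : nat,
    (TV (w_dx fm fp dt dx v w0 n.+1) <= TV (w_dx fm fp dt dx v w0 n))%E /\
    (TV (w_dx fm fp dt dx v w0 n) <= TV w0)%E.
Proof.
move=> dfm _ dfp _ [mv [Mv hMv]] hv01 [mw0 [Mw hMw]] _ dt0 dx0 /andP[eps0 eps1] cfl n.
set N := Linfty_norm w0.
set c := 2^-1 - eps.
have lam0 : 0 < dt / dx by rewrite divr_gt0.
have c0 : 0 <= c by rewrite /c; lra.
have c2 : c <= 2^-1 by rewrite /c; lra.
have lip : forall vv, 0 <= vv <= 1 -> forall x y, `|x| <= N -> `|y| <= N ->
     dt / dx * `|flux fm fp y vv - flux fm fp x vv| <= c * `|y - x|.
  move=> vv hvv; apply: lip_mvt => //.
    by move=> x; apply: flux_derivable.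
  by move=> w hw; apply: cfl.
have hv : forall j, 0 <= vh dx v j <= 1.
  move=> j; rewrite /vh /avg.
  have := @avg_in R v _ (xc dx j) (xc dx (j + 1)) 0 1 Mv _ mv hMv hv01 (fun x h => h).
  rewrite (_ : xc dx (j + 1) - xc dx j = dx); last by rewrite /xc intrD /=; ring.
  apply; rewrite /xc ltr_pM2r // intrD /=; lra.
have hinit : forall j, `|w_init dx w0 j| <= N.
  move=> j; apply: lb_le_inf; first by exists Mw.
  move=> M hM; rewrite ler_norml.
  have := @avg_in R w0 _ (xh dx (j - 1)) (xh dx j) (- M) M Mw (xh_lt _ dx0) mw0 hMw hM.
  rewrite xh_diff; apply => x; rewrite ler_norml; exact.
set W := scheme fm fp dt dx v w0.
have WS : forall k, W k.+1 = step fm fp dt dx v (W k) by [].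
have bnd : forall k j, `|W k j| <= N.
  elim => [|k IH]; first exact: hinit.
  have [al [be [h1 h2 h3]]] := step_decomp lam0 c0 hv lip IH.
  rewrite WS; exact: maxp_step c2 h1 h2 h3 IH.
have Sdec : forall k, (Sw (W k.+1) <= Sw (W k))%E.
  move=> k; have [al [be [h1 h2 h3]]] := step_decomp lam0 c0 hv lip (bnd k).
  apply: ge_ereal_sup => _ [[m q] _ <-] /=.
  apply: le_trans (_ : (Dw (W k) (m - 1) q.+2)%:E <= _)%E.
    by rewrite lee_fin WS; exact: tvd_step c2 h1 h2 h3 m q.
  by apply: ereal_sup_ubound; exists (m - 1, q.+2).
have Smono : forall k, (Sw (W k) <= Sw (W 0%N))%E.
  elim => // k IH; exact: le_trans (Sdec k) IH.
have S0 : (Sw (W 0%N) <= TV w0)%E.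
  apply: le_ereal_inf_tmp => _ [g hg <-].
  apply: ge_ereal_sup => _ [[m q] _ <-] /=.
  exact: TVp_lower_init dx0 mw0 hMw hg m q.
set J := fun x : R => Num.floor (x / dx + 2^-1).
have Jh : {homo J : x y / x <= y}.
  move=> x y xy; rewrite /J; apply: le_floor; rewrite lerD2r ler_pM2r //.
  by rewrite invr_gt0.
have wE : forall k, w_dx fm fp dt dx v w0 k = W k \o J by [].
have up : forall k, (TV (w_dx fm fp dt dx v w0 k) <= Sw (W k))%E.
  move=> k; apply: (@le_trans _ _ (TV_pointwise (w_dx fm fp dt dx v w0 k))).
    by apply: ereal_inf_lbound; exists (w_dx fm fp dt dx v w0 k) => //; apply: aeW.
  by rewrite wE; exact: TVp_step Jh.
have low : forall k, (Sw (W k) <= TV (w_dx fm fp dt dx v w0 k))%E.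
  move=> k; apply: le_ereal_inf_tmp => _ [g hg <-].
  apply: ge_ereal_sup => _ [[m q] _ <-] /=.
  exact: TVp_lower dx0 hg m q.
split.
  exact: le_trans (up _) (le_trans (Sdec n) (low n)).
exact: le_trans (up _) (le_trans (Smono n) S0).
Qed.
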